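(* Let $q=p^m$ with $p$ an odd prime and $m\ge 1$, let $f(x)=x^{q+2}$ on $\mathbb{F}_{q^2}$, and for $b\in\mathbb{F}_{q^2}$ let $\delta(b)=\#\{u\in\mathbb{F}_{q^2}:\ 2u^{q+1}+u^2=b\}$ (equivalently $\delta(b)=\delta_f(1,b+\tfrac14)$). Then for every $b\in\mathbb{F}_{q^2}^*$, $\delta(b)$ is even and $\delta(b)\le 4$.
   Context: $\delta_f(a,b)=\#\{x\in\mathbb{F}_{q^2}:\ f(x+a)-f(x)=b\}$. *)

(* Defs.v *)
From mathcomp Require Import all_boot all_order all_algebra all_field.
Set Implicit Arguments. Unset Strict Implicit. Unset Printing Implicit Defensive.
Import GRing.Theory.
Local Open Scope ring_scope.

Definition delta (F : finFieldType) (q : nat) (b : F) : nat :=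
  #|[set u : F | 2 * u ^+ q.+1 + u ^+ 2 == b]|.

(* Main.v *)
Require Import Defs.
From mathcomp Require Import all_boot all_order all_algebra all_field.
From mathcomp Require Import ring.
Import GRing.Theory.
Local Open Scope ring_scope.

Lemma roots_card_lt (F : finFieldType) (P : {poly F}) :
  P != 0 -> (#|[set x | root P x]| < size P)%N.
Proof.
move=> P0; rewrite cardE.
apply: max_poly_roots => //; last exact: enum_uniq.
by apply/allP => x; rewrite mem_enum inE.
Qed.

Lemma even_set (F : finFieldType) (S : {set F}) :
  (2 : F) != 0 -> 0 \notin S -> (forall x, x \in S -> - x \in S) ->
  ~~ odd #|S|.
Proof.
move=> two0.
have [n] : exists n, (#|S| <= n)%N by exists #|S|.
elim: n S => [|n IH] S leS S0 SN.
  by move: leS; rewrite leqn0 => /eqP ->.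
case: (set_0Vmem S) => [->|[x xS]]; first by rewrite cards0.
have nx : - x != x.
  apply/negP => /eqP e.
  have : x + x = 0 by rewrite -{1}e addNr.
  rewrite -mulr2n -mulr_natl => /eqP; rewrite mulf_eq0 (negPf two0) /= => /eqP x0.
  by move: S0; rewrite -x0 xS.
have nxS : - x \in S :\ x by rewrite !inE nx SN.
have cS : #|S| = (#|S :\ x :\ - x|).+2.
  by rewrite (cardsD1 x) xS (cardsD1 (- x)) nxS.
rewrite cS /= negbK; apply: IH.
- by move: leS; rewrite cS ltnS => /ltnW.
- rewrite !inE; apply/negP => /and3P[_ _ H]; by rewrite H in S0.
- move=> y; rewrite !inE => /and3P[ny1 ny2 yS].
  rewrite SN // andbT; apply/andP; split.
    by rewrite eqr_opp.
  by apply: contra ny1 => /eqP <-; rewrite opprK.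
Qed.

Theorem lemma8 (p m : nat) (F : finFieldType) :
  prime p -> odd p -> (0 < m)%N ->
  #|F| = ((p ^ m) ^ 2)%N ->
  forall b : F, b != 0 ->
    ~~ odd (delta (p ^ m) b) /\ (delta (p ^ m) b <= 4)%N.
Proof.
move=> pp op m0 cardF b b0.
have charp : p \in [pchar F].
  by apply: (@card_finPcharP F p (m * 2)); rewrite // expnM.
set q := (p ^ m)%N.
have oq : odd q by rewrite /q oddX op orbT.
have qD : forall x y : F, (x + y) ^+ q = x ^+ q + y ^+ q.
  move=> x y; apply: exprDn_pchar.
  rewrite (eq_pnat _ (pcharf_eq charp)) /q pnatX pnat_id //.
have Fq : forall x : F, x ^+ q ^+ q = x.
  by move=> x; rewrite -exprM mulnn -cardF expf_card.
have two : (2 : F) ^+ q = 2 by rewrite -[2]/(1 + 1 : F) qD expr1n.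
rewrite /delta -/q; split.
  apply: even_set.
  - apply/negP => /eqP H2.
    have : (2%N \in [pchar F]) by apply/andP; split => //; apply/eqP.
    rewrite (pcharf_eq charp) inE => /eqP e.
    by move: op; rewrite -e.
  - rewrite inE expr0n /= expr0n /= mulr0 addr0 eq_sym; exact: b0.
  - move=> x; rewrite !inE exprNn sqrrN -signr_odd /= oq /=.
    by rewrite expr0 mul1r.
pose G : {poly F} := Poly [:: - b ^+ 2; 0; 4 * b ^+ q - 2 * b; 0; 3].
have G0 : G != 0.
  apply/negP => /eqP G0.
  have : G`_0 = 0 by rewrite G0 coef0.
  rewrite coef_Poly /= => /eqP; rewrite oppr_eq0 expf_eq0 /= (negPf b0).
  by [].
have szG : (size G <= 5)%N by exact: size_Poly.
apply: leq_trans (_ : (#|[set x | root G x]| <= 4)%N).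
  apply: subset_leq_card; apply/subsetP => u; rewrite !inE => /eqP Hu.
  have Hbq : b ^+ q = (u ^+ q) ^+ 2 + 2 * u * u ^+ q.
    rewrite -Hu qD exprMn two exprS exprMn Fq exprAC.
    by rewrite addrC [u ^+ q * u]mulrC mulrA.
  rewrite /root /G horner_Poly /= Hbq -Hu !exprS.
  move: (u ^+ q) => w; apply/eqP; ring.
by have := leq_trans (@roots_card_lt _ G G0) szG; rewrite ltnS.
Qed.
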